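(* For every finite simple digraph $G$, ${\sf dtw}(G) \leq {\sf circ}(G) + 1$, where ${\sf dtw}(G)$ is the directed treewidth of $G$ and ${\sf circ}(G)$ is its circumference.
   Context: All digraphs are finite and simple (no loops, no multiple arcs). The circumference ${\sf circ}(G)$ of a digraph $G$ is the length (number of arcs) of a longest simple directed cycle in $G$; if $G$ is acyclic (a DAG), ${\sf circ}(G)$ is defined to be $1$. An arborescence is a DAG $T$ with a unique root $r$ (node with no incoming arcs) such that for every node $i$ there is a unique directed walk from $r$ to $i$. For distinct nodes $i,j$ of $T$ write $i \prec j$ if there is a directed walk in $T$ from $i$ to $j$, and $i \preceq j$ if $i=j$ or $i\prec j$. For an arc $e=(i,j)$ of $T$ and a node $k$, write $e \prec k$ if $j=k$ or $j \prec k$; write $e \sim i$ if $e$ is incident with $i$. Given sets $W_i$ for nodes $i$, let $W_{\succ e}=\bigcup_{k: e\prec k} W_k$; given sets $A_e$ for arcs $e$, let $A_{\sim i}=\bigcup_{e\sim i}A_e$. For $W,X\subseteq V(G)$, $W$ is $X$-normal if $W\cap X=\emptyset$ and there is no directed path in $G\setminus X$ (the subdigraph induced by $V(G)\setminus X$) whose first and last vertices are in $W$ and which uses a vertex outside $W\cup X$. An arboreal decomposition of $G$ is a triple $(T,(W_i)_{i\in V(T)},(A_e)_{e\in E(T)})$ where $T$ is an arborescence, the $W_i$ and $A_e$ are subsets of $V(G)$, $(W_i)_{i\in V(T)}$ is a partition of $V(G)$, and for each arc $e$ of $T$, $W_{\succ e}$ is $A_e$-normal. Its width is $\max_{i\in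 V(T)}|W_i\cup A_{\sim i}|-1$, and the directed treewidth ${\sf dtw}(G)$ is the minimum width of an arboreal decomposition of $G$. *)

(* Defs.v *)
From Stdlib Require Import ClassicalEpsilon.
From mathcomp Require Import all_boot.
Set Implicit Arguments. Unset Strict Implicit. Unset Printing Implicit Defensive.

(* A finite simple digraph on vertex type V is a relation g : rel V
   (g x y = arc from x to y), loopless (irreflexive g); multiple arcs
   cannot occur in this representation. *)

Definition pb (P : Prop) : bool :=
  if excluded_middle_informative P then true else false.

(* A directed cycle of length n: n pairwise distinct vertices v_0..v_{n-1}
   with arcs v_i -> v_{i+1} and v_{n-1} -> v_0 ([cycle] from path.v).
   In a loopless digraph, n >= 2 automatically. *)
Definition has_cycle_of_length (V : finType) (g : rel V) (n : nat) : bool :=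
  [exists t : n.-tuple V, uniq t && cycle g t].

Definition circ (V : finType) (g : rel V) : nat :=
  maxn 1 (\max_(n < #|V|.+1 | has_cycle_of_length g n) n).

Definition dag (I : finType) (t : rel I) : Prop :=
  forall c : seq I, c != [::] -> ~~ cycle t c.

Definition arborescence (I : finType) (t : rel I) (r : I) : Prop :=
  [/\ dag t,
      (forall i : I, (forall j : I, ~~ t j i) <-> i = r)
    & (forall i : I, exists! p : seq I, path t r p /\ last r p = i)].

Definition normal (V : finType) (g : rel V) (X W : {set V}) : Prop :=
  [disjoint W & X] /\
  ~ (exists (x : V) (q : seq V),
        [/\ path g x q && uniq (x :: q), all (fun v => v \notin X) (x :: q),
            x \in W, last x q \in W
          & has (fun v => v \notin W) (x :: q)]).

(* W_{succ e} for an arc e = (i, j): union of W_k over all k with e ≺ k,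
   i.e. k = j or j ≺ k, i.e. k reachable from j in t. *)
Definition W_succ (I V : finType) (t : rel I) (W : I -> {set V}) (j : I)
  : {set V} := \bigcup_(k | connect t j k) W k.

Definition A_sim (I V : finType) (t : rel I) (A : I -> I -> {set V}) (i : I)
  : {set V} :=
  (\bigcup_(j | t i j) A i j) :|: (\bigcup_(j | t j i) A j i).

Definition partition_family (I V : finType) (W : I -> {set V}) : Prop :=
  (forall x : V, exists i : I, x \in W i) /\
  (forall i j : I, i != j -> [disjoint W i & W j]).

(* (T, W, A) is an arboreal decomposition of g, where T = (I, t) with root r
   and A i j is the set A_e attached to the arc e = (i, j) (only meaningful
   when t i j). *)
Definition arboreal_decomposition (V : finType) (g : rel V)
  (I : finType) (t : rel I) (r : I) (W : I -> {set V}) (A : I -> I -> {set V})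
  : Prop :=
  [/\ arborescence t r,
      partition_family W
    & forall i j : I, t i j -> normal g (A i j) (W_succ t W j)].

(* width = max_i |W_i ∪ A_{~i}| - 1 (truncated subtraction: only matters for
   the empty digraph). *)
Definition width (I V : finType) (t : rel I) (W : I -> {set V})
  (A : I -> I -> {set V}) : nat :=
  (\max_(i : I) #|W i :|: A_sim t A i|).-1.

Definition has_decomp_of_width (V : finType) (g : rel V) (k : nat) : Prop :=
  exists (I : finType) (t : rel I) (r : I) (W : I -> {set V})
         (A : I -> I -> {set V}),
    arboreal_decomposition g t r W A /\ width t W A = k.

(* The trivial one-node decomposition exists, so the minimum is well defined. *)
Lemma has_decomp_exists (V : finType) (g : rel V) :
  exists k, pb (has_decomp_of_width g k).
Proof.
exists (width (fun _ _ : unit => false) (fun _ : unit => [set: V])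
               (fun _ _ : unit => (set0 : {set V}))).
rewrite /pb; case: excluded_middle_informative => // H; exfalso; apply: H.
exists (unit : finType), (fun _ _ => false), tt, (fun _ => [set: V]),
  (fun _ _ => set0); split; last by [].
rewrite /arboreal_decomposition /arborescence /partition_family.
split; [split | split | by []].
- by rewrite /dag; case=> [|x c] // _; case: c.
- by move=> [] ; split.
- move=> [] ; exists [::]; split=> // p [Hp _].
  by case: p Hp.
- by move=> x; exists tt; rewrite inE.
- by move=> [] [].
Qed.

Definition dtw (V : finType) (g : rel V) : nat :=
  ex_minn (has_decomp_exists g).

(* Main.v *)
Require Import Defs.
From Stdlib Require Import ClassicalEpsilon.
From mathcomp Require Import all_boot zify.
Set Implicit Arguments. Unset Strict Implicit. Unset Printing Implicit Defensive.

Section DFS.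
Variables (V : finType) (g : rel V).

Definition gU (U : {set V}) : rel V := fun x y => [&& g x y, x \in U & y \in U].

Definition inD (pre sz : V -> nat) (v w : V) : Prop :=
  pre w <= pre v /\ pre v < pre w + sz w.

Record dfs_ok (U P : {set V}) (pre sz : V -> nat) (par : V -> option V) : Prop :=
 DfsOk {
  d_sz : forall v, v \in U -> 0 < sz v /\ pre v + sz v <= #|U|;
  d_inj : forall v w, v \in U -> w \in U -> pre v = pre w -> v = w;
  d_lam : forall v w, v \in U -> w \in U -> inD pre sz v w ->
          pre v + sz v <= pre w + sz w;
  d_par : forall v u, v \in U -> par v = Some u ->
          [/\ u \in U, g u v, inD pre sz v u & u != v];
  d_up : forall v w, v \in U -> w \in U -> inD pre sz v w -> v != w ->
          exists2 u, par v = Some u & inD pre sz u w;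
  d_root : forall v, v \in U -> par v = None -> v \in P;
  d_edge : forall y z, y \in U -> z \in U -> g y z ->
          inD pre sz z y \/ pre z < pre y }.

Lemma path_restrict (S U : {set V}) x s :
  path (gU U) x s -> all (fun y => y \in S) (x :: s) -> path (gU S) x s.
Proof.
elim: s x => [|y s IH] x //= /andP[/and3P[gxy _ _] Hp] /and3P[xS yS Hs].
rewrite /gU gxy xS yS /=. apply: IH => //=. by rewrite yS.
Qed.

Lemma path_connect_last (e : rel V) x s :
  path e x s -> forall y, y \in x :: s -> connect e y (last x s).
Proof.
elim: s x => [|z s IH] x /=.
  by move=> _ y; rewrite inE => /eqP->.
move=> /andP[exz Hp] y; rewrite inE => /orP[/eqP->|Hy].
  by apply: connect_trans (connect1 exz) _; apply: IH; rewrite ?inE ?eqxx.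
exact: IH.
Qed.

Lemma dfs_empty P : dfs_ok set0 P (fun _ => 0) (fun _ => 1) (fun _ => None).
Proof. by split=> v; rewrite ?inE //; move=> w; rewrite inE. Qed.


Lemma connect_in (U : {set V}) x y : x \in U -> connect (gU U) x y -> y \in U.
Proof.
move=> xU /connectP [p Hp ->].
case/lastP: p Hp => [|p z] //=; rewrite rcons_path last_rcons.
by move=> /andP[_ /and3P[_ _]].
Qed.

Ltac blia := repeat match goal with H : is_true ?b |- _ =>
  lazymatch b with leq _ _ => fail | _ => clear H end end; lia.

Ltac cl cls pS pU2 pc szc parc H1 H2 v vU Hv :=
  let E := fresh "E" in
  case: (cls v vU) => [E|Hv|Hv];
  [ subst v; rewrite ?pc ?szc ?parc
  | let e1 := fresh "e" in let e2 := fresh "e" in let e3 := fresh "e" in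
    have [e1 [e2 e3]] := pS v Hv; rewrite ?e1 ?e2 ?e3;
    have [? ?] := d_sz H1 Hv
  | let e1 := fresh "e" in let e2 := fresh "e" in let e3 := fresh "e" in
    have [e1 [e2 e3]] := pU2 v Hv; rewrite ?e1 ?e2 ?e3;
    have [? ?] := d_sz H2 Hv ].

Lemma dfs_exists n : forall (U P : {set V}), #|U| <= n ->
  (forall u, u \in U -> exists p, [/\ p \in P, p \in U & connect (gU U) p u]) ->
  exists pre sz par, dfs_ok U P pre sz par.
Proof.
elim: n => [|n IHn] U P HU Hreach.
  have -> : U = set0 by apply/eqP; rewrite -cards_eq0 -leqn0.
  by exists (fun _ => 0), (fun _ => 1), (fun _ => None); apply: dfs_empty.
case: (set_0Vmem U) => [->|[u0 Hu0]].
  by exists (fun _ => 0), (fun _ => 1), (fun _ => None); apply: dfs_empty.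
have [c [cP cU _]] := Hreach u0 Hu0.
pose R := [set u | connect (gU U) c u].
have RU : forall u, u \in R -> u \in U.
  by move=> u; rewrite inE; apply: connect_in.
have Rcl : forall y z, y \in R -> z \in U -> g y z -> z \in R.
  move=> y z Hy Hz Hg; have yU := RU _ Hy; move: Hy; rewrite !inE => Hy.
  by apply: connect_trans Hy (connect1 _); rewrite /gU Hg yU Hz.
have cR : c \in R by rewrite inE connect0.
pose S := R :\ c. pose U2 := U :\: R.
have cardR : #|R| = #|S|.+1 by rewrite (cardsD1 c R) cR.
have cardU : #|U| = #|R| + #|U2|.
  have E : U :&: R = R by apply/setIidPr/subsetP => x; exact: RU.
  by rewrite -(cardsID R U) E.
have [pre1 [sz1 [par1 H1]]] : exists pre sz par, dfs_ok S [set u | g c u] pre sz par.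
  apply: IHn; first by blia.
  move=> u; rewrite in_setD1 => /andP[uc uR].
  move: uR; rewrite inE => /connectP [q Hq Hu]; move: uc; rewrite Hu.
  case/shortenP: Hq => q' Hpath Hun _.
  case: q' Hpath Hun => [|p q''] Hpath Hun; first by rewrite /= eqxx.
  move: (Hpath) => /= /andP[gcp Hp]; move: Hun => /= /andP[Hc _] _.
  have pR : p \in R by rewrite inE; apply: connect1.
  have pc : p != c by move: Hc; rewrite inE negb_or eq_sym => /andP[].
  move: gcp => /and3P[gcp _ pU].
  exists p; split; first by rewrite inE.
    by rewrite in_setD1 pc pR.
  apply/connectP; exists q'' => //.
  apply: path_restrict Hp _; apply/allP => y Hy; rewrite in_setD1; apply/andP; split.
    by apply: contraNneq Hc => <-.
  by rewrite inE; apply: (path_connect Hpath); rewrite inE Hy orbT.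
have [pre2 [sz2 [par2 H2]]] : exists pre sz par, dfs_ok U2 P pre sz par.
  apply: IHn; first by blia.
  move=> u; rewrite in_setD => /andP[uR uU].
  have [p [pP pU Hpu]] := Hreach u uU.
  case/connectP: Hpu => q Hq Hu.
  have Hall : all (fun y => y \in U2) (p :: q).
    apply/allP => y Hy; rewrite in_setD; apply/andP; split.
      apply: contra uR => yR; rewrite Hu; move: yR; rewrite !inE => yR.
      exact: connect_trans yR (path_connect_last Hq Hy).
    exact: connect_in pU (path_connect Hq Hy).
  exists p; split => //; first by move: Hall => /andP[].
  by apply/connectP; exists q => //; apply: path_restrict Hq Hall.
pose pre v := if v == c then 0 else if v \in S then (pre1 v).+1 else #|R| + pre2 v.
pose sz v := if v == c then #|R| else if v \in S then sz1 v else sz2 v.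
pose par v := if v == c then None else if v \in S then Some (odflt c (par1 v)) else par2 v.
exists pre, sz, par.
have cls : forall v, v \in U -> [\/ v = c, v \in S | v \in U2].
  move=> v vU; case: (eqVneq v c) => [->|vc]; first by constructor 1.
  case vR: (v \in R); [constructor 2 | constructor 3].
    by rewrite in_setD1 vc vR.
  by rewrite in_setD vR vU.
have Sc : forall v, v \in S -> v != c /\ v \in R.
  by move=> v; rewrite in_setD1 => /andP[].
have U2f : forall v, v \in U2 -> [/\ v != c, v \notin S & v \notin R].
  move=> v; rewrite in_setD => /andP[vR _]; split => //.
    by apply: contraNneq vR => ->.
  by rewrite in_setD1 (negbTE vR) andbF.
have pc : pre c = 0 by rewrite /pre eqxx.
have szc : sz c = #|R| by rewrite /sz eqxx.
have parc : par c = None by rewrite /par eqxx.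
have pS : forall v, v \in S -> pre v = (pre1 v).+1 /\ sz v = sz1 v /\ par v = Some (odflt c (par1 v)).
  by move=> v vS; have [vc _] := Sc v vS; rewrite /pre /sz /par (negbTE vc) vS.
have pU2 : forall v, v \in U2 -> pre v = #|R| + pre2 v /\ sz v = sz2 v /\ par v = par2 v.
  by move=> v vU2; have [vc vS _] := U2f v vU2; rewrite /pre /sz /par (negbTE vc) (negbTE vS).
have SU : forall v, v \in S -> v \in U by move=> v /Sc [_ /RU].
have U2U : forall v, v \in U2 -> v \in U by move=> v; rewrite in_setD => /andP[].
clearbody pre sz par. clear IHn Hreach HU RU. clearbody R S U2.
split.
- move=> v vU; cl cls pS pU2 pc szc parc H1 H2 v vU Hv; blia.
- move=> v w vU wU; cl cls pS pU2 pc szc parc H1 H2 v vU Hv; cl cls pS pU2 pc szc parc H1 H2 w wU Hw; move=> E;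
  first [ done | blia | (apply: (d_inj H1); [assumption|assumption|blia])
        | (apply: (d_inj H2); [assumption|assumption|blia]) ].
- move=> v w vU wU; rewrite /inD; cl cls pS pU2 pc szc parc H1 H2 v vU Hv; cl cls pS pU2 pc szc parc H1 H2 w wU Hw; move=> [Ha Hb];
  first [ blia | (have := d_lam H1 Hv Hw; rewrite /inD; blia)
        | (have := d_lam H2 Hv Hw; rewrite /inD; blia) ].
- move=> v u vU; cl cls pS pU2 pc szc parc H1 H2 v vU Hv => //.
  + case E: (par1 v) => [u'|] /= [<-].
      have [u'S gu' [Ha Hb] u'v] := d_par H1 Hv E.
      split; [exact: SU | done | | done].
      have [f1 [f2 _]] := pS u' u'S; have [f3 _] := pS v Hv.
      rewrite /inD f1 f2 f3; blia.
    split; [done | | | ].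
    * by have := d_root H1 Hv E; rewrite inE.
    * by have [f3 _] := pS v Hv; rewrite /inD pc szc f3; blia.
    * by rewrite eq_sym; have [] := Sc v Hv.
  + move=> E; have [uU2 guv [Ha Hb] uv] := d_par H2 Hv E.
    split; [exact: U2U | done | | done].
    have [f1 [f2 _]] := pU2 u uU2; have [f3 _] := pU2 v Hv.
    rewrite /inD f1 f2 f3; blia.
- move=> v w vU wU; rewrite /inD; cl cls pS pU2 pc szc parc H1 H2 v vU Hv;
  cl cls pS pU2 pc szc parc H1 H2 w wU Hw; move=> [Ha Hb] vw; try blia.
  + by rewrite eqxx in vw.
  + exists (odflt c (par1 v)) => //.
    case E: (par1 v) => [u|] /=; last by blia.
    have [uS _ _ _] := d_par H1 Hv E.
    have [f1 _] := pS u uS; have [? ?] := d_sz H1 uS.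
    rewrite f1; blia.
  + have Hin : inD pre1 sz1 v w by rewrite /inD; blia.
    have [u E [Hu1 Hu2]] := d_up H1 Hv Hw Hin vw.
    have [uS _ _ _] := d_par H1 Hv E.
    exists u; first by rewrite E.
    have [f1 [f2 _]] := pS u uS; have [f3 [f4 _]] := pS w Hw.
    rewrite f1; blia.
  + have Hin : inD pre2 sz2 v w by rewrite /inD; blia.
    have [u E [Hu1 Hu2]] := d_up H2 Hv Hw Hin vw.
    have [uU2 _ _ _] := d_par H2 Hv E.
    exists u => //.
    have [f1 [f2 _]] := pU2 u uU2; have [f3 [f4 _]] := pU2 w Hw.
    rewrite f1; blia.
- move=> v vU; cl cls pS pU2 pc szc parc H1 H2 v vU Hv => //.
  by move=> E; apply: (d_root H2 Hv E).
- move=> y z yU zU gyz; rewrite /inD.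
  have zR : y \in R -> z \in R by move=> yR; apply: Rcl gyz.
  cl cls pS pU2 pc szc parc H1 H2 y yU Hy; cl cls pS pU2 pc szc parc H1 H2 z zU Hz;
  first [ (left; blia) | (right; blia) | idtac ].
  + by have [_ _ /negP []] := U2f z Hz; apply: zR.
  + by case: (d_edge H1 Hy Hz gyz); rewrite /inD => ?; [left|right]; blia.
  + by have [_ _ /negP []] := U2f z Hz; apply: zR; have [] := Sc y Hy.
  + by case: (d_edge H2 Hy Hz gyz); rewrite /inD => ?; [left|right]; blia.
Qed.


Lemma dfs_full : exists pre sz par, dfs_ok [set: V] [set: V] pre sz par.
Proof.
apply: (@dfs_exists #|[set: V]|) => // u _.
by exists u; split; rewrite ?inE ?connect0.
Qed.

Fixpoint ancf (par : V -> option V) (n : nat) (v : V) : seq V :=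
  if n is n'.+1 then (if par v is Some u then u :: ancf par n' u else [::])
  else [::].

Section Tree.
Variables (pre sz : V -> nat) (par : V -> option V).
Hypothesis H : dfs_ok [set: V] [set: V] pre sz par.
Local Notation D := (inD pre sz).

Lemma szpos v : 0 < sz v. Proof. by have [] := d_sz H (in_setT v). Qed.
Lemma prebnd v : pre v + sz v <= #|V|.
Proof. by have [] := d_sz H (in_setT v); rewrite cardsT. Qed.
Lemma prelt v : pre v < #|V|.
Proof. by have := szpos v; have := prebnd v; blia. Qed.
Lemma preinj v w : pre v = pre w -> v = w.
Proof. exact (d_inj H (in_setT v) (in_setT w)). Qed.
Lemma Dlam v w : D v w -> pre v + sz v <= pre w + sz w.
Proof. exact (d_lam H (in_setT v) (in_setT w)). Qed.
Lemma parE v u : par v = Some u -> [/\ g u v, D v u & u != v].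
Proof. by move=> E; have [] := d_par H (in_setT v) E. Qed.
Lemma parlt v u : par v = Some u -> pre u < pre v.
Proof.
move=> /parE [_ [H1 H2] uv]; have : pre u != pre v.
  by apply: contra uv => /eqP /preinj ->.
blia.
Qed.
Lemma Dup v w : D v w -> v != w -> exists2 u, par v = Some u & D u w.
Proof. exact (d_up H (in_setT v) (in_setT w)). Qed.
Lemma Dedge y z : g y z -> D z y \/ pre z < pre y.
Proof. exact (d_edge H (in_setT y) (in_setT z)). Qed.
Lemma Drefl v : D v v.
Proof. by rewrite /inD; have := szpos v; blia. Qed.
Lemma Dtrans x y z : D x y -> D y z -> D x z.
Proof. move=> Hxy Hyz; have := Dlam Hyz; move: Hxy Hyz; rewrite /inD; blia. Qed.
Lemma Dantisym x y : D x y -> D y x -> x = y.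
Proof. by rewrite /inD => ? ?; apply: preinj; blia. Qed.

Lemma pre_ind (P : V -> Prop) :
  (forall v, (forall u, pre u < pre v -> P u) -> P v) -> forall v, P v.
Proof.
move=> IH v; suff : forall n v, pre v < n -> P v by apply; apply: ltnSn.
elim=> [|n IHn] {}v Hv //; apply: IH => u Hu; apply: IHn; blia.
Qed.

Definition anc v := ancf par #|V| v.
Definition chain v := v :: anc v.

Lemma ancf_stab n m v : pre v < n -> pre v < m -> ancf par n v = ancf par m v.
Proof.
elim: n m v => [|n IHn] [|m] v //= Hn Hm.
case E: (par v) => [u|] //; have := parlt E => Hu.
by congr (_ :: _); apply: IHn; blia.
Qed.

Lemma anc_Some v u : par v = Some u -> anc v = u :: anc u.
Proof.
move=> E; have Hu := parlt E; have := prelt v; rewrite /anc.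
case: #|V| => [|N] // HN; rewrite [ancf _ N.+1 v]/= E; congr (_ :: _); apply: ancf_stab; blia.
Qed.

Lemma anc_None v : par v = None -> anc v = [::].
Proof. by move=> E; have := prelt v; rewrite /anc; case: #|V| => [|N] //= _; rewrite E. Qed.

Lemma anc_lt v : forall x, x \in anc v -> pre x < pre v.
Proof.
elim/pre_ind: v => v IH x; case E: (par v) => [u|]; last by rewrite anc_None.
rewrite (anc_Some E) inE => /orP[/eqP-> | Hx]; first exact: parlt E.
by have := IH u (parlt E) x Hx; have := parlt E; blia.
Qed.

Lemma chain_uniq v : uniq (chain v).
Proof.
elim/pre_ind: v => v IH; rewrite /chain.
case E: (par v) => [u|]; last by rewrite anc_None.
rewrite (anc_Some E) -/(chain u) cons_uniq IH ?andbT; last exact: parlt E.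
rewrite /chain inE negb_or; apply/andP; split.
  by have [_ _] := parE E; rewrite eq_sym.
by apply/negP => /anc_lt; have := parlt E; blia.
Qed.

Lemma chain_path v : path (fun a b => par a == Some b) v (anc v).
Proof.
elim/pre_ind: v => v IH.
case E: (par v) => [u|]; last by rewrite anc_None.
by rewrite (anc_Some E) /= E eqxx /=; apply: IH; apply: parlt E.
Qed.

Lemma D1 y w : D y w -> exists s, chain y = s ++ chain w /\ (forall b, b \in s -> D b w).
Proof.
elim/pre_ind: y => y IH Hyw.
case: (eqVneq y w) => [->|yw]; first by exists [::].
have [u E Huw] := Dup Hyw yw.
have [s' [Hs' Hb]] := IH u (parlt E) Huw.
exists (y :: s'); split; first by rewrite /chain (anc_Some E) -/(chain u) Hs'.
by move=> b; rewrite inE => /orP[/eqP->|]; [exact: Hyw | exact: Hb].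
Qed.

Lemma D3a v a : a \in anc v -> D v a /\ a != v.
Proof.
elim/pre_ind: v => v IH Ha; split; last first.
  by apply: contraTneq Ha => ->; apply/negP => /anc_lt; blia.
case E: (par v) => [u|]; last by move: Ha; rewrite anc_None.
have [_ Dvu _] := parE E.
move: Ha; rewrite (anc_Some E) inE => /orP[/eqP-> //| Ha].
have [Dua _] := IH u (parlt E) Ha.
exact: Dtrans Dvu Dua.
Qed.

Lemma D3b v a : D v a -> a != v -> a \in anc v.
Proof.
move=> Dva av; have [s [Hs _]] := D1 Dva.
case: s Hs => [|b s] /=; first by rewrite /chain => -[E]; rewrite E eqxx in av.
by rewrite /chain => -[_ ->]; rewrite mem_cat inE eqxx orbT.
Qed.


Lemma circ_ge (c : seq V) : uniq c -> cycle g c -> size c <= circ g.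
Proof.
move=> Hu Hc.
have Hs : size c < #|V|.+1 by rewrite ltnS -(card_uniqP Hu) max_card.
rewrite /circ; apply: leq_trans (leq_maxr 1 _).
have := @leq_bigmax_cond _ (fun n : 'I_#|V|.+1 => has_cycle_of_length g n)
  (fun n => nat_of_ord n) (Ordinal Hs).
apply; apply/existsP; exists (in_tuple c); by rewrite /= Hu Hc.
Qed.

Definition Ds v := [set x | (pre v <= pre x) && (pre x < pre v + sz v)].
Lemma DsP x v : reflect (D x v) (x \in Ds v).
Proof. by rewrite inE; apply: (iffP andP). Qed.

Lemma step v w w' : pre w < pre v -> w \notin anc v -> g w w' -> pre w' < pre v.
Proof.
move=> Hw Ha gw.
have nDvw : ~ D v w.
  move=> Dvw; have wv : w != v by apply/eqP => wv; subst; blia.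
  by have := D3b Dvw wv; rewrite (negbTE Ha).
case: (Dedge gw) => [|]; last blia.
by move: nDvw; rewrite /inD; blia.
Qed.

Lemma hit v : forall p z, path g z p -> pre z < pre v -> last z p \in Ds v ->
  exists seg a rest, [/\ z :: p = seg ++ a :: rest, a \in anc v &
    forall w, w \in seg -> pre w < pre v /\ w \notin anc v].
Proof.
elim=> [|z' p IH] z Hp Hz Hl; case Ha: (z \in anc v).
- by exists [::], z, [::].
- by move: Hl => /DsP; rewrite /inD /=; blia.
- by exists [::], z, (z' :: p).
move: Hp => /= /andP[gzz' Hp].
have Hz' := step Hz (negbT Ha) gzz'.
have [seg [a [rest [E Ha' Hw]]]] := IH z' Hp Hz' Hl.
exists (z :: seg), a, rest; split => //; first by rewrite E.
move=> w; rewrite inE => /orP[/eqP->|]; [by rewrite Ha | exact: Hw].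
Qed.

Lemma exitl v : forall q x, x \in Ds v -> has (fun w => w \notin Ds v) (x :: q) ->
  exists p1 y z p2, [/\ x :: q = p1 ++ y :: z :: p2, y \in Ds v & z \notin Ds v].
Proof.
elim=> [|z q IH] x Hx /=; first by rewrite Hx.
rewrite Hx /=; case Hz: (z \in Ds v) => /= Hh.
  have Hh' : has (fun w => w \notin Ds v) (z :: q) by rewrite /= Hz.
  have [p1 [y [z' [p2 [E Hy Hz']]]]] := IH z Hz Hh'.
  by exists (x :: p1), y, z', p2; rewrite E.
by exists [::], x, z, q; rewrite Hz.
Qed.

Lemma path_suffix (e : rel V) x q p1 y s :
  path e x q -> x :: q = p1 ++ y :: s -> path e y s.
Proof.
move=> Hp; case: p1 => [|b p1] [Ex Eq]; subst; first done.
by move: Hp; rewrite cat_path => /andP[_ /= /andP[_ ->]].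
Qed.


Lemma normal_A v : normal g [set a in take (circ g) (anc v)] (Ds v).
Proof.
split.
  rewrite disjoints_subset; apply/subsetP => x /DsP Dxv; rewrite !inE.
  apply/negP => /mem_take /D3a [Dvx xv].
  by rewrite (Dantisym Dxv Dvx) eqxx in xv.
move=> [x [q [/andP[Hp Hu] Hall Hx Hl Hhas]]].
have [p1 [y [z [p2 [E Hy Hz]]]]] := exitl Hx Hhas.
have /= /andP[gyz Hp2] := path_suffix Hp E.
have Dyv : D y v by apply/DsP.
have nDz : ~ D z v by move=> /DsP; rewrite (negbTE Hz).
have Hzv : pre z < pre v.
  case: (Dedge gyz) => [Dzy|Hzy]; first by case: nDz; apply: Dtrans Dzy Dyv.
  by move: Dyv nDz; rewrite /inD; blia.
have El : last x q = last z p2 by rewrite -(last_cons x x q) E last_cat.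
rewrite El in Hl.
have [seg [a [rest [E2 Ha Hseg]]]] := hit Hp2 Hzv Hl.
have E3 : x :: q = p1 ++ y :: seg ++ a :: rest by rewrite E E2.
have HaA : a \notin [set a in take (circ g) (anc v)].
  by apply: (allP Hall); rewrite E3 mem_cat inE mem_cat inE eqxx !orbT.
have Hu2 : uniq (y :: seg ++ a :: rest) by move: Hu; rewrite E3 cat_uniq => /and3P[_ _].
have Hpy : path g y (rcons seg a).
  by move: (path_suffix Hp E3); rewrite -cat_rcons cat_path => /andP[].
have [s1 [Es1 Hs1]] := D1 Dyv.
have Had : a \in drop (circ g) (anc v).
  move: Ha; rewrite -{1}(cat_take_drop (circ g) (anc v)) mem_cat => /orP[|//].
  by move=> Hat; move: HaA; rewrite inE Hat.
have Hsz : size (take (circ g) (anc v)) = circ g.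
  apply: size_takel.
  have : 0 < size (drop (circ g) (anc v)) by case: (drop _ _) Had.
  rewrite size_drop; blia.
have [d1 [d2 Ed]] : exists d1 d2, drop (circ g) (anc v) = d1 ++ a :: d2.
  by case/splitPr: Had => d1 d2; exists d1, d2.
have Eanc : anc v = take (circ g) (anc v) ++ d1 ++ a :: d2 by rewrite -Ed cat_take_drop.
have [T [ET HTel HTsz]] : exists T, [/\ chain y = T ++ a :: d2,
    forall w, w \in T -> D w v \/ w \in anc v & circ g < size T].
  exists (s1 ++ v :: take (circ g) (anc v) ++ d1); split.
  - by rewrite Es1 /chain {1}Eanc -!catA /= -!catA.
  - move=> w; rewrite mem_cat inE mem_cat => /or4P [Hw|/eqP->|Hw|Hw].
    + by left; apply: Hs1.
    + by left; apply: Drefl.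
    + by right; apply: mem_take Hw.
    + by right; apply: (@mem_drop (circ g)); rewrite Ed mem_cat Hw.
  - by rewrite size_cat /= size_cat Hsz; blia.
case: T ET HTel HTsz => [|b T'] //; rewrite /chain => -[Eb ET2] HTel HTsz; subst b.
have HpT : path (fun b c => par b == Some c) y (rcons T' a).
  by move: (chain_path y); rewrite ET2 -cat_rcons cat_path => /andP[].
have HgT : path g a (rev (y :: T')).
  have := rev_path g y (rcons T' a); rewrite last_rcons belast_rcons => ->.
  by apply: sub_path HpT => b c /eqP /parE [gcb _ _].
have Hcyc : cycle g (a :: (rev (y :: T') ++ seg)).
  change (path g a (rcons (rev (y :: T') ++ seg) a)).
  by rewrite rcons_cat cat_path HgT rev_cons last_rcons Hpy.
have Huc : uniq (a :: (rev (y :: T') ++ seg)).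
  have HuT' : uniq ((y :: T') ++ a :: d2) by have := chain_uniq y; rewrite /chain ET2.
  move: HuT'; rewrite cat_uniq => /and3P[HuT HaT _].
  move/norP: HaT => [HaT _].
  rewrite cons_uniq mem_cat mem_rev negb_or HaT /= cat_uniq rev_uniq HuT /=.
  apply/andP; split.
    by apply/negP => /Hseg [_]; rewrite Ha.
  apply/andP; split; last by move: Hu2; rewrite cons_uniq cat_uniq => /andP[_ /and3P[]].
  apply/hasPn => w Hw; rewrite mem_rev; apply/negP => HwT.
  have [Hwv Hwa] := Hseg w Hw.
  case: (HTel w HwT) => [|Hwa']; first by rewrite /inD; blia.
  by rewrite Hwa' in Hwa.
have := circ_ge Huc Hcyc; rewrite /= size_cat size_rev /=; move: HTsz => /=; blia.
Qed.


Definition tr : rel (option V) := fun i j => if j is Some v then par v == i else false.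
Definition rk (i : option V) := if i is Some v then (pre v).+1 else 0.

Lemma tr_rk i j : tr i j -> rk i < rk j.
Proof.
case: j => [v|] //= /eqP E; case: i E => [u|] /= E; last by [].
by have := parlt E; blia.
Qed.

Lemma tr_uniq_path : forall p1 p2 i, path tr None p1 -> last None p1 = i ->
  path tr None p2 -> last None p2 = i -> p1 = p2.
Proof.
elim/last_ind=> [|p1 z IH] p2 i.
  move=> _ <-; case/lastP: p2 => [|p2 z2] //.
  by rewrite rcons_path last_rcons => /andP[_ Hz] Ez; rewrite Ez /= in Hz.
rewrite rcons_path last_rcons => /andP[Hp1 Hz] Ez.
case/lastP: p2 => [|p2 z2]; first by move=> _ /= Ei; rewrite Ez -Ei /= in Hz.
rewrite rcons_path last_rcons => /andP[Hp2 Hz2] Ez2.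
move: Ez2; rewrite -Ez => Ez2; subst z2; clear Ez.
case: z Hz Hz2 => [w|] //= /eqP E1 /eqP E2.
by rewrite (IH p2 (last None p1)) // -E2 E1.
Qed.

Lemma arbo : arborescence tr None.
Proof.
split.
- case=> [|x p] // _; apply/negP => /= Hc.
  have Htr : transitive (fun i j : option V => rk i < rk j).
    by move=> a b c; apply: ltn_trans.
  move: (order_path_min Htr (sub_path tr_rk Hc)) => /allP /(_ x).
  have Hx : x \in rcons p x by rewrite mem_rcons inE eqxx.
  by move=> /(_ Hx) /=; rewrite ltnn.
- case=> [v|]; split => //.
  move=> Hin; case E: (par v) => [u|].
    by have := Hin (Some u); rewrite /= E eqxx.
  by have := Hin None; rewrite /= E eqxx.
- move=> i.
  have Ex : forall v, exists p, path tr None p /\ last None p = Some v.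
    elim/pre_ind=> v IH; case E: (par v) => [u|].
      have [p [Hp Hl]] := IH u (parlt E).
      exists (rcons p (Some v)); by rewrite rcons_path last_rcons Hp Hl /= E eqxx.
    by exists [:: Some v]; rewrite /= E eqxx.
  have [p [Hp Hl]] : exists p, path tr None p /\ last None p = i.
    by case: i => [v|]; [apply: Ex | exists [::]].
  exists p; split => // p' [Hp' Hl'].
  exact: tr_uniq_path Hp Hl Hp' Hl'.
Qed.

Lemma connect_tr v x : connect tr (Some v) (Some x) <-> D x v.
Proof.
split.
  case/connectP => p Hp Hl.
  suff : forall p y, path tr (Some y) p -> last (Some y) p = Some x -> D x y.
    by move=> /(_ p v Hp (esym Hl)).
  elim=> [|k p' IH] y /=; first by move=> _ [->]; apply: Drefl.
  case: k => [z|] //= /andP[/eqP Ez Hp'] Hl'.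
  have [_ Dzy _] := parE Ez.
  exact: Dtrans (IH z Hp' Hl') Dzy.
elim/pre_ind: x => x IH Dxv.
case: (eqVneq x v) => [->|xv]; first by apply: connect0.
have [u E Duv] := Dup Dxv xv.
apply: connect_trans (IH u (parlt E) Duv) (connect1 _).
by rewrite /= E.
Qed.

Definition Wf (i : option V) : {set V} := if i is Some v then [set v] else set0.
Definition Af (i j : option V) : {set V} :=
  if j is Some v then [set a in take (circ g) (anc v)] else set0.

Lemma Wsucc_eq v : W_succ tr Wf (Some v) = Ds v.
Proof.
apply/setP => x; apply/bigcupP/DsP.
  case=> [[y|]] Hk; rewrite /= ?inE // => /eqP ->.
  by apply/connect_tr.
move=> Dxv; exists (Some x); last by rewrite /= inE.
by apply/connect_tr.
Qed.

Lemma decomp_ok : arboreal_decomposition g tr None Wf Af.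
Proof.
split.
- exact: arbo.
- split; first by move=> x; exists (Some x); rewrite /= inE.
  case=> [a|] [b|] //= ab.
  + by rewrite disjoints1 inE; apply: contra ab => /eqP ->.
  + by rewrite disjoints1 inE.
  + by rewrite disjoints_subset sub0set.
- case=> [u|] [v|] //= _; rewrite Wsucc_eq; exact: normal_A.
Qed.


Lemma width_le : width tr Wf Af <= circ g + 1.
Proof.
rewrite /width.
suff Hm : \max_(i : option V) #|Wf i :|: A_sim tr Af i| <= circ g + 1.
  exact: leq_trans (leq_pred _) Hm.
apply/bigmax_leqP => i _.
case: i => [v|].
- apply: (@leq_trans #|[set x in v :: take (circ g) (anc v)]|).
    apply: subset_leq_card; apply/subsetP => x.
    rewrite !in_setU in_set1 => /or3P [Hx | /bigcupP [j Hj Hx] | /bigcupP [j Hj Hx]];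
      rewrite inE inE.
    + by rewrite Hx.
    + case: j Hj Hx => [c|] //= /eqP Ec; rewrite inE (anc_Some Ec).
      case: (circ g) => [|k] //=; rewrite inE => /orP[->//|Hx].
      by apply/orP; right; apply: (@mem_take k); rewrite take_takel.
    + by move: Hx; rewrite /= inE => ->; rewrite orbT.
  rewrite cardsE; apply: leq_trans (card_size _) _; rewrite /= size_take.
  by case: (ltnP (circ g) (size (anc v))) => Hk; blia.
- apply: (@leq_trans #|(set0 : {set V})|); last by rewrite cards0.
  apply: subset_leq_card; apply/subsetP => x.
  rewrite !in_setU in_set0 => /or3P [// | /bigcupP [j Hj Hx] | /bigcupP [j Hj Hx]].
  + by case: j Hj Hx => [c|] //= /eqP Ec; rewrite inE (anc_None Ec).
  + by case: j Hj Hx.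
Qed.

End Tree.
End DFS.

Theorem mainTheorem1 (V : finType) (g : rel V) (loopless : irreflexive g) :
  dtw g <= circ g + 1.
Proof.
have [pre [sz [par H]]] := dfs_full g.
rewrite /dtw; case: ex_minnP => m Hm Hmin.
apply: leq_trans (width_le H).
apply: Hmin; rewrite /pb; case: excluded_middle_informative => // [[]].
exists (option V : finType); do 4 eexists; split; [exact: decomp_ok H | reflexivity].
Qed.
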